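(* Let $A$ be a treatment taking values in a finite set $\mathcal{A}=\{a_1,\ldots,a_J\}$, let $X$ be a vector of measured pre-treatment covariates, and for each $a\in\mathcal{A}$ let $Y(a)$ be the potential outcome under treatment $a$, with observed binary outcome $Y=\sum_{j=1}^J Y(a_j)\mathbb{1}(A=a_j)$. Fix $x$ with $p_m:=\mathbb{P}(A=a_m\mid X=x)\in(0,1)$ for all $m$. For $a,a'\in\mathcal{A}$ with $a\neq a'$ define the confounding function $$c(a,a',x)=\mathbb{E}[Y(a)\mid A=a,X=x]-\mathbb{E}[Y(a)\mid A=a',X=x].$$ Consider the pairwise treatment effect between $a_j\neq a_k\in\mathcal{A}$ on the risk-difference scale, and suppose $Y(a)$ is not conditionally independent of $A$ given $X$ (treatment assignment is not ignorable). Then the bias incurred by ignoring unmeasured confounding, namely $$\mathrm{Bias}(a_j,a_k)=\mathbb{E}[Y\mid A=a_j,X=x]-\mathbb{E}[Y\mid A=a_k,X=x]-\mathbb{E}[Y(a_j)-Y(a_k)\mid X=x],$$ equals $$\mathrm{Bias}(a_j,a_k)=-p_j\,c(a_k,a_j,x)+p_k\,c(a_j,a_k,x)-\sum_{l:\,a_l\in\mathcal{A}\setminus\{a_j,a_k\}}p_l\{c(a_k,a_l,x)-c(a_j,a_l,x)\}.$$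
   Context: Potential outcomes framework: each unit has potential outcomes $Y(a_1),\ldots,Y(a_J)$, of which only the one for the received treatment is observed. The generalized propensity scores $\mathbb{P}(A=a_m\mid X=x)$ sum to 1 over $m$. The stable unit treatment value assumption (each unit's potential outcomes do not depend on other units' treatments) and overlap ($0<\mathbb{P}(A=a\mid X)<1$ for all $a$) are maintained. *)

(* Defs.v *)
From HB Require Import structures.
From mathcomp Require Import all_boot all_order all_algebra.
From mathcomp Require Import all_classical all_reals all_analysis.
Set Implicit Arguments. Unset Strict Implicit. Unset Printing Implicit Defensive.
Import Order.TTheory GRing.Theory Num.Theory.
Local Open Scope classical_set_scope.
Local Open Scope ring_scope.

Section Defs.
Context (d : measure_display) (T : measurableType d) (R : realType).

Definition cexp (P : probability T R) (B : set T) (f : T -> R) : R :=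
  fine (\int[P]_(w in B) (f w)%:E) / fine (P B).

Definition expect (P : probability T R) (f : T -> R) : R :=
  fine (\int[P]_w (f w)%:E).

Definition evA (J : nat) (A : T -> 'I_J) (m : 'I_J) : set T :=
  [set w | A w = m].

Definition indep_rv (P : probability T R) (J : nat) (V : T -> R)
  (A : T -> 'I_J) : Prop :=
  forall (B : set R) (m : 'I_J), measurable B ->
    P (V @^-1` B `&` evA A m) = (P (V @^-1` B) * P (evA A m))%E.

End Defs.

(* Main.v *)
Require Import Defs.
From HB Require Import structures.
From mathcomp Require Import all_boot all_order all_algebra ring lra.
From mathcomp Require Import all_classical all_reals all_analysis.
Import Order.TTheory GRing.Theory Num.Theory.
Local Open Scope classical_set_scope.
Local Open Scope ring_scope.

Section S.
Context (d : measure_display) (T : measurableType d) (R : realType)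
  (P : probability T R) (J : nat) (A : T -> 'I_J)
  (hA : forall m, measurable (evA A m)).

Lemma bigU_evA : \big[setU/set0]_(i <- enum 'I_J) evA A i = setT.
Proof.
apply/seteqP; split => // w _.
rewrite -bigcup_seq /=; exists (A w) => //=; by rewrite mem_enum.
Qed.

Lemma integ_bd (f : T -> R) (D : set T) : measurable D -> measurable_fun setT f ->
  (forall w, `|f w| <= 2) -> P.-integrable D (EFin \o f).
Proof.
move=> mD mf hb; apply: measurable_bounded_integrable => //.
- by rewrite (le_lt_trans (probability_le1 _ _)) // ltry.
- exact: measurable_funS mf.
- exists 2; split => // M M2 x _; exact: (le_trans (hb x) (ltW M2)).
Qed.

Lemma decomp (f : T -> R) : measurable_fun setT f -> (forall w, `|f w| <= 2) ->
  fine (\int[P]_w (f w)%:E) = \sum_(m < J) fine (\int[P]_(w in evA A m) (f w)%:E).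
Proof.
move=> mf hb.
have := @integral_bigsetU_EFin _ _ _ P _ (evA A) f (enum 'I_J) hA (enum_uniq _).
rewrite bigU_evA => ->.
- rewrite -sum_fine ?big_enum //.
  move=> m _; apply: integrable_fin_num => //; exact: integ_bd.
- by move=> i l _ _ [w [/= <- <-]].
- exact/measurable_realfun.measurable_EFinP.
Qed.
End S.
Lemma split3 (R : realType) J (G : 'I_J -> R) (j k : 'I_J) : j != k ->
  \sum_m G m = G j + G k + \sum_(l < J | (l != j) && (l != k)) G l.
Proof.
move=> hjk; rewrite (bigD1 j) //= (bigD1 k) /=; last by rewrite eq_sym.
by rewrite addrA.
Qed.

Lemma alg (R : realType) J (p : 'I_J -> R) (E : 'I_J -> 'I_J -> R) (j k : 'I_J) :
  j != k -> \sum_m p m = 1 ->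
  let c a a' := E a a - E a' a in
  E j j - E k k - \sum_m (p m * E m j - p m * E m k)
  = - p j * c k j + p k * c j k
    - \sum_(l < J | (l != j) && (l != k)) p l * (c k l - c j l).
Proof.
move=> hjk hs c; rewrite /c.
set F := fun m => p m * E m j - p m * E m k.
rewrite (@split3 _ _ F _ _ hjk) (@split3 _ _ p _ _ hjk) in hs *.
rewrite [X in _ = _ - X](eq_bigr (fun l => p l * (E k k - E j j) + F l)); last by move=> l _; rewrite /F; ring.
rewrite [X in _ = _ - X]big_split /= -mulr_suml.
set S := \sum_(l < J | _) p l in hs *.
set SF := \sum_(l < J | _) F l.
have -> : S = 1 - p j - p k by rewrite -hs; ring.
rewrite /F; ring.
Qed.

Theorem theorem1 (d : measure_display) (T : measurableType d) (R : realType)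
  (P : probability T R) (J : nat) (A : T -> 'I_J) (Yp : 'I_J -> T -> R)
  (Y : T -> R)
  (hA : forall m, measurable (evA A m))
  (hYm : forall a, measurable_fun setT (Yp a))
  (hYbin : forall a w, Yp a w = 0 \/ Yp a w = 1)
  (hY : forall w, Y w = \sum_(m < J) Yp m w * (A w == m)%:R)
  (hover : forall m, 0 < fine (P (evA A m)) < 1)
  (hnonign : exists a, ~ indep_rv P (Yp a) A)
  (j k : 'I_J) (hjk : j != k) :
  let p m := fine (P (evA A m)) in
  let c a a' := cexp P (evA A a) (Yp a) - cexp P (evA A a') (Yp a) in
  cexp P (evA A j) Y - cexp P (evA A k) Y
    - expect P (fun w => Yp j w - Yp k w)
  = - p j * c k j + p k * c j k
    - \sum_(l < J | (l != j) && (l != k)) p l * (c k l - c j l).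
Proof.
move=> p c.
have bd1 a w : `|Yp a w| <= 1.
  by case: (hYbin a w) => ->; rewrite ?normr0 ?normr1.
have bd2 a w : `|Yp a w| <= 2.
  by apply: (le_trans (bd1 a w)); rewrite ler1n.
have pne m : p m != 0 by have /andP[h _] := hover m; rewrite gt_eqF.
have pc m a : p m * cexp P (evA A m) (Yp a) = fine (\int[P]_(w in evA A m) (Yp a w)%:E).
  by rewrite /cexp mulrC divfK //; exact: pne.
have hs : \sum_m p m = 1.
  have b1 : forall w : T, `|(fun _ => 1 : R) w| <= 2 by move=> w; rewrite normr1 ler1n.
  have := @decomp _ _ _ P _ A hA (fun _ => 1) (measurable_cst _) b1.
  rewrite integral_cst // mul1e /= (probability_setT P) => h.
  transitivity (fine (1%E : \bar R)); last by [].
  rewrite h; apply: eq_bigr => m _; by rewrite integral_cst // mul1e.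
have eYm (m0 : 'I_J) : cexp P (evA A m0) Y = cexp P (evA A m0) (Yp m0).
  rewrite /cexp (@eq_integral _ _ _ P (evA A m0) (fun w => (Yp m0 w)%:E)) // => w.
  rewrite inE /evA /= => Aw; rewrite hY Aw (bigD1 m0) //= eqxx mulr1 big1 ?addr0 //.
  by move=> l /negbTE; rewrite eq_sym => ->; rewrite mulr0.
have hE : expect P (fun w => Yp j w - Yp k w) =
   \sum_m (p m * cexp P (evA A m) (Yp j) - p m * cexp P (evA A m) (Yp k)).
  rewrite /expect (@decomp _ _ _ P _ A hA); last first.
    by move=> w; apply: le_trans (ler_normB _ _) _; apply: lerD.
    exact: measurable_realfun.measurable_funB.
  apply: eq_bigr => m0 _; rewrite !pc.
  have hi a : P.-integrable (evA A m0) (EFin \o Yp a) by exact: integ_bd.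
  under eq_integral do rewrite EFinB.
  by rewrite integralB_EFin // fineB //; apply: (integrable_fin_num (hA m0)); exact: hi.
rewrite hE !eYm; exact: (@alg R J p (fun m a => cexp P (evA A m) (Yp a)) j k hjk hs).
Qed.
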